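(* Let $\ell = p_1^{d_1}\cdots p_r^{d_r}$ with distinct primes $p_i$ and $d_i \ge 1$, let $A = A_1\times\cdots\times A_r$ with $A_i$ elementary abelian of order $p_i^{d_i}$, so that $\mathrm{Aut}(A) = \mathrm{GL}(d_1,p_1)\times\cdots\times \mathrm{GL}(d_r,p_r)$, and let $U \leq \mathrm{Aut}(A)$. Put $\sigma_i(U) = U \cap \mathrm{GL}(d_i,p_i)$ and $O(U) = O_{p_1}(\sigma_1(U))\times\cdots\times O_{p_r}(\sigma_r(U))$. Then: (a) $O(U)$ is the largest normal subgroup of $U$ that centralizes a series through $A$; (b) $U$ is $F$-relevant if and only if $O(U) = \{1\}$.
   Context: $O_p(X)$ denotes the largest normal $p$-subgroup of a finite group $X$. A subgroup $N \le \mathrm{Aut}(A)$ centralizes a series through $A$ if there is an $N$-invariant series of subgroups $A = A_1' > A_2' > \cdots > A_{l+1}' = \{1\}$ such that $N$ induces the identity on every quotient $A_j'/A_{j+1}'$. A subgroup $U \le \mathrm{Aut}(A)$ is $F$-relevant if no non-trivial normal subgroup of $U$ centralizes a series through $A$. *)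

(* Defs.v *)
From HB Require Import structures.
From mathcomp Require Import all_boot all_fingroup all_solvable.
Set Implicit Arguments. Unset Strict Implicit. Unset Printing Implicit Defensive.
Local Open Scope group_scope.

Section Defs.
Variable gT : finGroupType.
Implicit Types (A : {group gT}) (N U : {set {perm gT}}).

Definition centralizes_series A N : Prop :=
  exists s : seq {group gT},
    [/\ (last A s :=: 1),
        all (fun H : {group gT} => [acts N, on H | 'P]) (A :: s)
      & path (fun H K : {group gT} =>
                (K \proper H) &&
                [forall a in N, forall x in H, (x^-1 * a x) \in K]) A s].

Definition F_relevant A U : Prop :=
  forall N : {group {perm gT}}, N <| U -> centralizes_series A N -> N :=: 1.

(* sigma_p(U) = U ∩ GL(d_p, p): the elements of U acting trivially on all
   the other Sylow components, i.e. on the p'-part O_{p'}(A) of A. *)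
Definition sigma A (p : nat) U : {set {perm gT}} := 'C_U('O_p^'(A) | 'P).

(* O(U) = O_{p_1}(sigma_1 U) x ... x O_{p_r}(sigma_r U), p_i ranging over the
   prime divisors of |A| (taken as the subgroup generated by the factors). *)
Definition OU A U : {set {perm gT}} :=
  << \bigcup_(p <- primes #|A|) 'O_p(sigma A p U) >>.
End Defs.

(* Main.v *)
Require Import Defs.
From HB Require Import structures.
From mathcomp Require Import all_boot all_fingroup all_solvable.
From mathcomp Require Import zify.
Local Open Scope group_scope.

Module Aux.
Set Implicit Arguments. Unset Strict Implicit. Unset Printing Implicit Defensive.

Section Helpers.
Variable gT : finGroupType.
Implicit Types (A B H K Z W : {group gT}).

Lemma autM A (a : {perm gT}) x y : a \in Aut A -> x \in A -> y \in A ->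
  a (x * y) = a x * a y.
Proof. by move=> Aa Ax Ay; have /morphicP := Aut_morphic Aa; apply. Qed.

Lemma aut1 A (a : {perm gT}) : a \in Aut A -> a 1 = 1.
Proof.
move=> Aa; have := autM Aa (group1 A) (group1 A); rewrite mulg1 => h.
by apply: (mulgI (a 1)); rewrite -h mulg1.
Qed.

Lemma autV A (a : {perm gT}) x : a \in Aut A -> x \in A -> a x^-1 = (a x)^-1.
Proof.
move=> Aa Ax; apply: (mulgI (a x)); rewrite -(autM Aa) ?groupV // mulgV mulgV.
exact: aut1 Aa.
Qed.

Lemma autX A (a : {perm gT}) x n : a \in Aut A -> x \in A -> a (x ^+ n) = (a x) ^+ n.
Proof.
move=> Aa Ax; elim: n => [|n IH]; first by rewrite !expg0 (aut1 Aa).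
by rewrite !expgS (autM Aa) ?groupX // IH.
Qed.

Lemma aut_char A H (a : {perm gT}) x : H \char A -> a \in Aut A -> x \in H -> a x \in H.
Proof.
move=> /charP[sHA chH] Aa Hx.
have := chH _ (injm_autm Aa) (im_autm Aa) => <-.
by rewrite -{1}(autmE Aa) mem_morphim // (subsetP sHA).
Qed.

Lemma aut_fix1 A (a : {perm gT}) : a \in Aut A -> {in A, forall x, a x = x} -> a = 1.
Proof.
move=> Aa fa; apply: (eq_Aut Aa (group1 _)) => x Ax; by rewrite perm1 fa.
Qed.

Lemma acts_of (aT : finGroupType) (sT : finType) (to : {action aT &-> sT})
   (N : {group aT}) (S : {set sT}) :
  (forall a x, a \in N -> x \in S -> to x a \in S) -> [acts N, on S | to].
Proof.
move=> h; apply/actsP => a Na x; apply/idP/idP; last exact: h.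
by move=> /(h _ _ (groupVr Na)); rewrite actK.
Qed.

Lemma acts_el (N : {set {perm gT}}) (S : {set gT}) a x :
  [acts N, on S | 'P] -> a \in N -> x \in S -> a x \in S.
Proof. by move=> /acts_act h Na Sx; rewrite -apermE h. Qed.

Lemma bigcup_seqP (T : finType) (r : seq nat) (F : nat -> {set T}) x :
  reflect (exists2 i, i \in r & x \in F i) (x \in \bigcup_(i <- r) F i).
Proof.
elim: r => [|i r IH]; first by rewrite big_nil inE; constructor => -[].
rewrite big_cons; apply: (iffP setUP) => [[h|/IH[j jr h]]|[j]].
- by exists i; rewrite ?mem_head.
- by exists j; rewrite // inE jr orbT.
rewrite inE => /orP[/eqP-> h|jr h]; first by left.
by right; apply/IH; exists j.
Qed.

Lemma bigcup_seq_subP (T : finType) (r : seq nat) (F : nat -> {set T}) (X : {set T}) :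
  reflect (forall i, i \in r -> F i \subset X) (\bigcup_(i <- r) F i \subset X).
Proof.
apply: (iffP subsetP) => [h i ir|h x /bigcup_seqP[i ir]]; last exact/subsetP/h.
by apply/subsetP => x Fx; apply: h; apply/bigcup_seqP; exists i.
Qed.

End Helpers.

Section S2.
Variable gT : finGroupType.
Implicit Types (A B H K Z W : {group gT}).

Definition srel (N : {set {perm gT}}) := fun H K : {group gT} =>
  (K \proper H) && [forall a in N, forall x in H, (x^-1 * a x) \in K].

Lemma series_triv A (N : {set {perm gT}}) (pi : nat_pred) B (b : {perm gT}) s H :
  N \subset Aut A -> b \in N -> pi.-elt b -> pi^'.-group B -> B \subset A ->
  (forall x, x \in B -> b x \in B) ->
  last H s :=: 1 -> path (srel N) H s ->
  forall x, x \in B -> x \in H -> b x = x.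
Proof.
move=> sNA Nb pib pB sBA bB.
have Ab := subsetP sNA _ Nb.
elim: s H => [|K s IH] H /=.
  move=> -> _ x _ /set1P ->; exact: aut1 Ab.
move=> hl /andP[/andP[_ /forall_inP/(_ b Nb) hK] hp] x Bx Hx.
have Ax := subsetP sBA _ Bx.
set y := x^-1 * b x.
have By : y \in B by rewrite groupM ?groupV ?bB.
have Ay := subsetP sBA _ By.
have Ky : y \in K by exact: (forall_inP hK x Hx).
have byy : b y = y by exact: IH K hl hp y By Ky.
have bx : b x = x * y by rewrite /y mulKVg.
have hk : forall k, (b ^+ k) x = x * y ^+ k.
  elim=> [|k IHk]; first by rewrite !expg0 perm1 mulg1.
  rewrite expgSr permM IHk (autM Ab) ?groupX //. by rewrite (autX _ Ab Ay) byy bx expgS -mulgA.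
have := hk #[b]; rewrite expg_order perm1 => /esym /(canRL (mulKg x)).
rewrite mulVg => /eqP; rewrite -order_dvdn => dv.
have y1 : #[y] = 1%N.
  apply: (pnat_1 (pi := pi)); first exact: pnat_dvd dv pib.
  exact: mem_p_elt pB By.
by move/eqP: y1; rewrite order_eq1 => /eqP y1; rewrite bx y1 mulg1.
Qed.


Lemma acts_aut A (N : {set {perm gT}}) : N \subset Aut A -> [acts N, on A | 'P].
Proof.
move=> sNA; apply/subsetP => a Na; apply/astabsP => x; rewrite ?apermE.
have Aa := subsetP sNA _ Na.
case Ax: (x \in A); first by rewrite Aut_closed.
have -> : 'P%act x a = a x by []. by rewrite (out_Aut Aa) ?Ax.
Qed.

Lemma asc_series A (N : {group {perm gT}}) : N \subset Aut A ->
  (forall Z : {group gT}, Z \proper A -> [acts N, on Z | 'P] ->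
     exists Z' : {group gT}, [/\ Z \proper Z', Z' \subset A, [acts N, on Z' | 'P]
        & forall a x, a \in N -> x \in Z' -> x^-1 * a x \in Z]) ->
  centralizes_series A N.
Proof.
move=> sNA step.
suff claim: forall n (Z : {group gT}), (#|A| - #|Z| <= n)%N -> Z \subset A ->
   [acts N, on Z | 'P] -> exists s : seq {group gT},
   [/\ last A s :=: Z, all (fun H : {group gT} => [acts N, on H | 'P]) (A :: s)
     & path (srel N) A s].
  have [|s [hl ha hp]] := claim #|A| 1%G (leq_subr _ _) (sub1G _).
    apply: acts_of => a x Na /set1P ->; have -> : 'P%act 1 a = a 1 by []; rewrite (aut1 (subsetP sNA _ Na)).
    exact: group1.
  by exists s; split.
elim=> [|n IH] Z hn sZA nZ.
  have eZ : Z :=: A.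
    apply/eqP; rewrite eqEcard sZA /=; by move: hn; rewrite leqn0 subn_eq0.
  by exists [::]; split => //=; rewrite ?andbT ?eZ //=; apply: acts_aut.
case pZ: (Z \proper A); last first.
  have eZ : Z :=: A by apply/eqP; rewrite eqEproper sZA pZ.
  by exists [::]; split => //=; rewrite ?andbT ?eZ //=; apply: acts_aut.
have [Z' [pZZ' sZ'A nZ' hZ']] := step Z pZ nZ.
have [|s [hl ha hp]] := IH Z' _ sZ'A nZ'.
  have := proper_card pZZ'; have := subset_leq_card sZ'A; move: hn.
  set a := #|A|; set b := #|Z|; set c := #|Z'|; clear; lia.
exists (rcons s Z); split.
- by rewrite last_rcons.
- by rewrite -rcons_cons all_rcons nZ.
rewrite rcons_path hp /= /srel hl pZZ' /=.
by apply/forall_inP => a Na; apply/forall_inP => x Z'x; apply: hZ'.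
Qed.

End S2.

Section Main.
Variables (gT : finGroupType) (A : {group gT}) (U : {group {perm gT}}).
Hypotheses (abA : abelian A) (sUAut : U \subset Aut A).

Let nilA : nilpotent A := abelian_nil abA.

Lemma acts_char (N : {group {perm gT}}) (H : {group gT}) :
  N \subset Aut A -> H \char A -> [acts N, on H | 'P].
Proof.
move=> sNA chH; apply: acts_of => a x Na Hx.
exact: aut_char chH (subsetP sNA _ Na) Hx.
Qed.

Lemma sigma_normal (p : nat) : sigma A p U <| U.
Proof.
rewrite /normal /sigma subsetIl normsI ?normG //.
apply: subset_trans (astab_norm _ _).
exact: acts_char sUAut (pcore_char _ _).
Qed.

Lemma Op_normal (p : nat) : 'O_p(sigma A p U) <| U.
Proof. exact: char_normal_trans (pcore_char _ _) (sigma_normal p). Qed.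

Lemma Op_in_OU (p : nat) : p \in primes #|A| -> 'O_p(sigma A p U) \subset OU A U.
Proof.
move=> pA; rewrite /OU; apply: sub_gen.
by apply/subsetP => x Px; apply/bigcup_seqP; exists p.
Qed.

Lemma OU_normal : OU A U <| U.
Proof.
rewrite /normal /OU gen_subG; apply/andP; split.
  by apply/bigcup_seq_subP => p _; apply: normal_sub (Op_normal p).
apply: norms_gen; apply: norms_bigcup.
elim: (primes #|A|) => [|p r IH]; first by rewrite big_nil subsetT.
by rewrite big_cons subsetI IH andbT; apply: normal_norm (Op_normal p).
Qed.

Lemma OU_aut : OU A U \subset Aut A.
Proof. exact: subset_trans (normal_sub OU_normal) sUAut. Qed.

Lemma OU_max (N : {group {perm gT}}) :
  N <| U -> centralizes_series A N -> N \subset OU A U.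
Proof.
move=> nNU [s [hl hall hp]].
have hp' : path (srel N) A s := hp.
have sNU := normal_sub nNU; have sNA := subset_trans sNU sUAut.
have inN : forall a pi, a \in N -> a.`_pi \in N.
  by move=> a pi Na; apply: (subsetP _ _ (cycle_constt pi a)); rewrite cycle_subG.
have key1 : forall (q : nat) a, a \in N -> a.`_q \in sigma A q U.
  move=> q a Na; have Naq := inN a q Na.
  apply/setIP; split; first exact: (subsetP sNU).
  apply/astabP => x Bx.
  apply: (series_triv (pi := q) (B := 'O_q^'(A)) sNA Naq (p_elt_constt _ _)
            (pcore_pgroup _ _) (pcore_sub _ _) _ hl hp' Bx
            (subsetP (pcore_sub _ _) _ Bx)).
  by move=> y By; exact: aut_char (pcore_char _ _) (subsetP sNA _ Naq) By.
have key2 : forall q : nat, N :&: sigma A q U \subset 'O_q(sigma A q U).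
  move=> q; apply: pcore_max; last first.
    rewrite /normal /= subsetIr normsI ?normG //.
    exact: subset_trans (subsetIl _ _) (normal_norm nNU).
  apply/pgroupP => r r_pr r_dv.
  have [y My oy] := Cauchy r_pr r_dv.
  suff: q.-elt y by rewrite /p_elt oy pnatE.
  case/setIP: My => Ny Sy.
  rewrite -p_eltNK; apply/constt1P.
  have Nc := inN y q^' Ny.
  have Sc : y.`_q^' \in sigma A q U.
    by apply: (subsetP _ _ (cycle_constt q^' y)); rewrite cycle_subG.
  have Ac := subsetP sNA _ Nc.
  apply: (aut_fix1 Ac) => x Ax.
  move: Ax; rewrite -(dprodW (nilpotent_pcoreC q nilA)) => /mulsgP[x1 x2 X1 X2 ->].
  have Ax1 : x1 \in A := subsetP (pcore_sub q A) _ X1.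
  have Ax2 : x2 \in A := subsetP (pcore_sub q^' A) _ X2.
  rewrite (autM Ac Ax1 Ax2).
  case/setIP: Sc => _ /astabP Cc.
  have c2 : y.`_q^' x2 = x2 := Cc x2 X2.
  rewrite c2.
  congr (_ * _).
  apply: (series_triv (pi := q^') (B := 'O_q(A)) sNA Nc (p_elt_constt _ _)
            _ (pcore_sub _ _) _ hl hp' X1 Ax1).
  - by rewrite pgroupNK; apply: pcore_pgroup.
  - by move=> z Bz; exact: aut_char (pcore_char _ _) Ac Bz.
apply/subsetP => a Na.
rewrite -(prod_constt a); apply: group_prod => q _.
case: (boolP (q \in primes #|A|)) => qA.
  apply: (subsetP (Op_in_OU qA)); apply: (subsetP (key2 q)).
  by rewrite inE inN // key1.
suff -> : a.`_q = 1 by apply: group1.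
have eA : 'O_q^'(A) = A.
  apply: pcore_pgroup_id; apply/pgroupP => r r_pr r_dv.
  rewrite inE /=; apply: contraNneq qA => <-.
  by rewrite mem_primes r_pr cardG_gt0 r_dv.
have := key1 q a Na; case/setIP => _ /astabP Cc.
apply: (aut_fix1 (subsetP sNA _ (inN a q Na))) => x Ax.
by apply: Cc; rewrite eA.
Qed.

End Main.

Section Coset.
Variable gT : finGroupType.

Lemma img_inv (a : {perm gT}) (W : {set gT}) :
  (forall z, z \in W -> a z \in W) -> [set a z | z in W] = W.
Proof.
move=> h; apply/eqP; rewrite eqEcard card_imset; last exact: perm_inj.
rewrite leqnn andbT; apply/subsetP => _ /imsetP[z Wz ->]; exact: h.
Qed.

Lemma img_coset (A W : {group gT}) (a : {perm gT}) y :
  a \in Aut A -> W \subset A -> (forall z, z \in W -> a z \in W) -> y \in A ->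
  [set a z | z in W :* y] = W :* a y.
Proof.
move=> Aa sWA h Ay; apply/eqP; rewrite eqEcard card_imset; last exact: perm_inj.
rewrite !card_rcoset leqnn andbT; apply/subsetP => _ /imsetP[z /rcosetP[w Ww ->] ->].
rewrite (autM Aa (subsetP sWA _ Ww) Ay); apply/rcosetP; exists (a w) => //.
exact: h.
Qed.
End Coset.

Section Step.
Variables (gT : finGroupType) (A : {group gT}) (U : {group {perm gT}}).
Hypotheses (abA : abelian A) (sUAut : U \subset Aut A).

Let nilA : nilpotent A := abelian_nil abA.
Let Q : {group {perm gT}} := generated_group (\bigcup_(p <- primes #|A|) 'O_p(sigma A p U)).

Lemma OU_step (Z : {group gT}) : Z \proper A -> [acts Q, on Z | 'P] ->
  exists Z' : {group gT}, [/\ Z \proper Z', Z' \subset A, [acts Q, on Z' | 'P]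
        & forall a x, a \in Q -> x \in Z' -> x^-1 * a x \in Z].
Proof.
move=> pZA nZ.
have sZA := proper_sub pZA.
have sQA : Q \subset Aut A := OU_aut sUAut.
have QZ : forall a z, a \in Q -> z \in Z -> a z \in Z.
  by move=> a z Qa Zz; exact: acts_el nZ Qa Zz.
case/properP: pZA => _ [x0 Ax0 nZx0].
have : ~~ all (fun p : nat => x0.`_p \in Z) (index_iota 0 #[x0].+1).
  apply: contra nZx0 => /allP h; rewrite -(prod_constt x0) big_seq.
  by apply: group_prod => i /h.
case/allPn => p _ nZb.
set b := x0.`_p in nZb.
set B := 'O_p(A).
have Ab : b \in A by apply: (subsetP _ _ (cycle_constt p x0)); rewrite cycle_subG.
have Bb : b \in B.
  by rewrite (mem_normal_Hall (nilpotent_pcore_Hall p nilA) (pcore_normal _ _) Ab) p_elt_constt.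
have nBZ : ~~ (B \subset Z) by apply/negP => /subsetP h; rewrite h in nZb.
have ntB : B :!=: 1 by apply: contra nBZ => /eqP ->; exact: sub1G.
have [p_pr pB _] := pgroup_pdiv (pcore_pgroup p A) ntB.
have pA : p \in primes #|A|.
  by rewrite mem_primes p_pr cardG_gt0 (dvdn_trans pB) ?cardSg ?pcore_sub.
set P := 'O_p(sigma A p U).
have sPQ : P \subset Q := Op_in_OU U pA.
have pP : p.-group P := pcore_pgroup _ _.
have AutB : forall a y, a \in Aut A -> y \in B -> a y \in B.
  by move=> a y Aa By; exact: aut_char (pcore_char _ _) Aa By.
set W := (Z :&: B)%G.
have sWA : W \subset A by apply: subset_trans (subsetIl _ _) sZA.
have QW : forall a z, a \in Q -> z \in W -> a z \in W.
  move=> a z Qa /setIP[Zz Bz]; apply/setIP; split; first exact: QZ.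
  by apply: AutB (subsetP sQA _ Qa) Bz.
set S := rcosets W B.
have nSP : [acts P, on S | 'P^*].
  apply: acts_of => a Y Pa /rcosetsP[y By ->].
  have Qa := subsetP sPQ _ Pa; have Aa := subsetP sQA _ Qa.
  rewrite /= setactE.
  rewrite (img_coset Aa sWA (QW a^~ Qa) (subsetP (pcore_sub _ _) _ By)).
  by apply/rcosetsP; exists (a y) => //; apply: AutB.
have fixmod := pgroup_fix_mod pP nSP.
have dS : p %| #|S|.
  have : p.-nat #|B : W| by apply: pnat_dvd (dvdn_indexg _ _) (pcore_pgroup _ _).
  have : 1 < #|B : W|.
    by rewrite indexg_gt1; apply/subsetPn; exists b => //; rewrite inE (negbTE nZb).
  move=> gt1 /p_natP[[|k] ek]; first by rewrite ek in gt1.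
  by rewrite /S -/(indexg _ _) ek expnS dvdn_mulr.
set F := 'Fix_(S | 'P^*)(P).
have WF : (W : {set gT}) \in F.
  apply/setIP; split; first by apply/rcosetsP; exists 1; rewrite ?group1 ?rcoset1.
  apply/afixP => a Pa; rewrite /= setactE; apply: img_inv => z.
  exact: QW (subsetP sPQ _ Pa).
have dF : p %| #|F|.
  by move: dS; rewrite /dvdn fixmod.
have : ~~ (F \subset [set (W : {set gT})]).
  apply/negP => sub; have := subset_leq_card sub; rewrite cards1 => le1.
  have F0 : 0 < #|F| by apply/card_gt0P; exists (W : {set gT}).
  by have := leq_trans (prime_gt1 p_pr) (leq_trans (dvdn_leq F0 dF) le1); rewrite ltnn.
case/subsetPn => Y FY nY; rewrite inE in nY.
case/setIP: FY => SY /afixP fixY.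
case/rcosetsP: SY => x Bx eY.
have Ax : x \in A := subsetP (pcore_sub _ _) _ Bx.
have nZx : x \notin Z.
  apply: contra nY => Zx; rewrite eY rcoset_id //.
  by apply/setIP; split.
have keyP : forall a, a \in P -> a x \in Z :* x.
  move=> a Pa; have Qa := subsetP sPQ _ Pa; have Aa := subsetP sQA _ Qa.
  have := fixY a Pa; rewrite /= eY setactE (img_coset Aa sWA (QW a^~ Qa) Ax) => e.
  have : a x \in W :* x by rewrite -e rcoset_refl.
  case/rcosetP => w /setIP[Zw _] ->; apply/rcosetP; exists w => //.
have sQC : Q \subset 'C[Z :* x | 'P^*].
  rewrite gen_subG; apply/bigcup_seq_subP => r rA; apply/subsetP => g Og.
  have Qg : g \in Q := subsetP (Op_in_OU U rA) _ Og.
  have Ag := subsetP sQA _ Qg.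
  have gx : g x \in Z :* x.
    case: (eqVneq r p) => [erp | nrp]; first by subst r; exact: keyP.
    have : g \in sigma A r U := subsetP (pcore_sub _ _) _ Og.
    case/setIP => _ /astabP Cg.
    have Bx' : x \in 'O_r^'(A).
      apply: (subsetP (sub_pcore _ _) _ Bx) => z; rewrite !inE => /eqP ->.
      by rewrite eq_sym.
    have -> : g x = x := Cg x Bx'.
    exact: rcoset_refl.
  apply/astab1P; rewrite /= setactE (img_coset Ag sZA (QZ g^~ Qg) Ax).
  by apply/rcoset_eqP.
set T := [set y in A | [forall a in Q, y^-1 * a y \in Z]].
have gT_ : group_set T.
  apply/group_setP; split.
    rewrite inE group1; apply/forall_inP => a Qa.
    by rewrite invg1 mul1g (aut1 (subsetP sQA _ Qa)) group1.
  move=> y w; rewrite !inE => /andP[Ay hy] /andP[Aw hw]; rewrite groupM //=.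
  apply/forall_inP => a Qa; have Aa := subsetP sQA _ Qa.
  have u := forall_inP hy a Qa; have v := forall_inP hw a Qa.
  rewrite (autM Aa Ay Aw) invMg !mulgA -(mulgA w^-1).
  have Au : y^-1 * a y \in A by rewrite groupM ?groupV ?Aut_closed.
  rewrite ((centsP abA) _ (groupVr Aw) _ Au) -!mulgA mulgA.
  by rewrite groupM.
exists (Group gT_); split.
- apply/properP; split.
    apply/subsetP => z Zz; rewrite inE (subsetP sZA _ Zz).
    by apply/forall_inP => a Qa; rewrite groupM ?groupV ?QZ.
  exists x => //; rewrite inE Ax; apply/forall_inP => a Qa.
  have := subsetP sQC _ Qa; move/astab1P; rewrite /= setactE => e.
  have : a x \in Z :* x by rewrite -e; apply: imset_f; exact: rcoset_refl.
  case/rcosetP => z Zz ->.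
  have Az := subsetP sZA _ Zz.
  by rewrite ((centsP abA) _ Az _ Ax) mulKg.
- by apply/subsetP => y; rewrite inE => /andP[].
- apply: acts_of => a y Qa; rewrite !inE => /andP[Ay hy].
  have Aa := subsetP sQA _ Qa.
  have -> : 'P%act y a = a y by [].
  rewrite Aut_closed //=; apply/forall_inP => q Qq.
  set q' := a * q * a^-1.
  have Qq' : q' \in Q by rewrite !groupM ?groupV.
  have Aq' := subsetP sQA _ Qq'.
  have e : q (a y) = a (q' y) by rewrite /q' !permM permKV.
  have Aqy : q' y \in A by rewrite Aut_closed.
  rewrite e -(autV Aa Ay) -(autM Aa (groupVr Ay) Aqy).
  by apply: QZ => //; exact: (forall_inP hy q' Qq').
- by move=> a y Qa; rewrite inE => /andP[_ /forall_inP h]; exact: h.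
Qed.

End Step.

End Aux.
Import Aux.

Theorem lemma3p3 (gT : finGroupType) (A : {group gT}) (U : {group {perm gT}})
  (abA : abelian A) (elemA : forall p : nat, prime p -> p.-abelem 'O_p(A))
  (sUAut : U \subset Aut A) :
  ([/\ OU A U <| U, centralizes_series A (OU A U)
     & forall N : {group {perm gT}},
         N <| U -> centralizes_series A N -> N \subset OU A U])
  /\ (F_relevant A U <-> OU A U = 1).
Proof.
have nOU := OU_normal sUAut.
have cs : centralizes_series A (OU A U).
  apply: (@asc_series _ A (generated_group (\bigcup_(p <- primes #|A|) 'O_p(sigma A p U)))).
    exact: OU_aut sUAut.
  exact: OU_step abA sUAut.
have mx := fun N => @OU_max _ A U abA sUAut N.
split; first by split.
split.
- by move=> FR; apply: (FR (generated_group _) nOU cs).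
- by move=> e N nNU csN; apply/trivgP; rewrite -e; exact: mx.
Qed.
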